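(* There exist a uniquely $4$-colourable plane triangulation $G'$, a set $\mathcal F$ of $24$ faces of $G'$, and a bijection $F\mapsto\phi_F$ between $\mathcal F$ and the $24$ proper colourings $V(G')\to\{1,2,3,4\}$ of $G'$, such that for every $F\in\mathcal F$, $\phi_F(V(F))=\{1,2,3\}$, where $V(F)$ is the set of vertices incident to $F$.
   Context: A graph is uniquely $4$-colourable if there is a unique partition of its vertex set into $4$ independent sets; such a graph has exactly $24$ proper colourings with colour set $\{1,2,3,4\}$. *)

(* Defs.v *)
(* Plane triangulations are encoded as planar (genus 0)
   combinatorial maps (hypermaps, in the style of the Four Colour Theorem
   formalisation): darts D, permutations edge/node/face with
   edge (node (face x)) = x; vertices = node orbits, edges = edge orbits,
   faces = face orbits. *)
From HB Require Import structures.
From mathcomp Require Import all_boot.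
Set Implicit Arguments. Unset Strict Implicit. Unset Printing Implicit Defensive.

Definition glink (D : finType) (e n f : D -> D) : rel D :=
  fun x y => [|| e x == y, n x == y | f x == y].

Record plane_triangulation (V D : finType) (vert : D -> V) (e n f : D -> D) : Prop :=
  PlaneTriangulation {
    pt_cancel3 : forall x, e (n (f x)) = x;
    pt_edge_inv : forall x, e (e x) = x;
    pt_edge_nofix : forall x, e x != x;
    pt_vert : forall x y, (vert x == vert y) = fconnect n x y;
    pt_vert_surj : forall v : V, exists x, vert x = v;
    pt_connected : forall x y, connect (glink e n f) x y;
    (* Euler formula, genus 0 with one component *)
    pt_euler : fcard e [set: D] + fcard n [set: D] + fcard f [set: D] = #|D| + 2;
    pt_triangular : forall x, order f x = 3;
    pt_noloop : forall x, vert x != vert (e x);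
    pt_nomulti : forall x y, vert x = vert y -> vert (e x) = vert (e y) -> x = y
  }.

Definition adj (V D : finType) (vert : D -> V) (e : D -> D) : rel V :=
  fun u v => [exists x, (vert x == u) && (vert (e x) == v)].

Definition independent (V : finType) (a : rel V) (B : {set V}) : bool :=
  [forall u in B, forall v in B, ~~ a u v].

Definition uniquely_4_colourable (V : finType) (a : rel V) : Prop :=
  exists! P : {set {set V}},
    [&& partition P [set: V], #|P| == 4 & [forall B in P, independent a B]].

(* colours 1,2,3,4 are represented by 0,1,2,3 : 'I_4 *)
Definition proper_colouring (V : finType) (a : rel V) (c : {ffun V -> 'I_4}) : bool :=
  [forall u, forall v, a u v ==> (c u != c v)].

Definition faces (D : finType) (f : D -> D) : {set {set D}} :=
  [set [set y | fconnect f x y] | x : D].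

(* Main.v *)
Require Import Defs.
From HB Require Import structures.
From mathcomp Require Import all_boot.
From mathcomp Require Import zify.
Set Implicit Arguments. Unset Strict Implicit. Unset Printing Implicit Defensive.
Definition vtab : seq nat := [:: 0; 2; 13; 2; 1; 13; 1; 0; 13; 0; 1; 14; 1; 10; 14; 10; 0; 14; 1; 3; 10; 3; 0; 10; 0; 3; 11; 3; 5; 11; 5; 0; 15; 0; 11; 15; 11; 5; 15; 3; 2; 9; 2; 8; 9; 8; 3; 12; 3; 9; 12; 9; 8; 12; 2; 7; 8; 7; 3; 8; 2; 6; 7; 6; 3; 7; 2; 5; 6; 5; 3; 6; 2; 0; 5; 1; 2; 4; 2; 3; 4; 3; 1; 4].
Definition etab : seq nat := [:: 72; 5; 7; 75; 8; 1; 9; 2; 4; 6; 14; 16; 20; 17; 10; 22; 11; 13; 81; 23; 12; 24; 15; 19; 21; 29; 33; 69; 36; 25; 73; 35; 37; 26; 38; 31; 28; 32; 34; 78; 44; 48; 56; 51; 40; 58; 50; 52; 41; 53; 46; 43; 47; 49; 62; 59; 42; 64; 45; 55; 68; 65; 54; 70; 57; 61; 74; 71; 60; 27; 63; 67; 0; 30; 66; 3; 80; 82; 39; 83; 76; 18; 77; 79].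
Definition ctab : seq nat := [:: 0; 1; 2; 3; 0; 1; 0; 1; 0; 1; 2; 2; 2; 3; 3; 3].
Definition ta : seq nat := [:: 0; 0; 0; 0; 1; 0; 3; 3; 3; 3; 0; 0; 8; 0; 0; 5].
Definition tb : seq nat := [:: 0; 0; 0; 0; 2; 3; 2; 2; 2; 2; 1; 3; 3; 2; 1; 0].
Definition tc : seq nat := [:: 0; 0; 0; 0; 3; 2; 5; 6; 7; 8; 3; 5; 9; 1; 10; 11].
Definition td : seq nat := [:: 0; 0; 0; 0; 0; 1; 0; 5; 6; 7; 2; 2; 2; 3; 3; 3].
Definition seltab : seq nat := [:: 0; 3; 6; 9; 12; 15; 18; 21; 24; 27; 30; 33; 36; 39; 42; 45; 51; 54; 57; 60; 63; 66; 69; 72].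
Definition coltab : seq (seq nat) := [:: [:: 0; 3; 1; 2; 0; 3; 0; 3; 0; 3; 1; 1; 1; 2; 2; 2]; [:: 3; 0; 1; 2; 3; 0; 3; 0; 3; 0; 1; 1; 1; 2; 2; 2]; [:: 0; 1; 3; 2; 0; 1; 0; 1; 0; 1; 3; 3; 3; 2; 2; 2]; [:: 0; 2; 3; 1; 0; 2; 0; 2; 0; 2; 3; 3; 3; 1; 1; 1]; [:: 3; 0; 2; 1; 3; 0; 3; 0; 3; 0; 2; 2; 2; 1; 1; 1]; [:: 0; 3; 2; 1; 0; 3; 0; 3; 0; 3; 2; 2; 2; 1; 1; 1]; [:: 3; 1; 0; 2; 3; 1; 3; 1; 3; 1; 0; 0; 0; 2; 2; 2]; [:: 1; 3; 0; 2; 1; 3; 1; 3; 1; 3; 0; 0; 0; 2; 2; 2]; [:: 1; 3; 2; 0; 1; 3; 1; 3; 1; 3; 2; 2; 2; 0; 0; 0]; [:: 3; 1; 2; 0; 3; 1; 3; 1; 3; 1; 2; 2; 2; 0; 0; 0]; [:: 1; 0; 3; 2; 1; 0; 1; 0; 1; 0; 3; 3; 3; 2; 2; 2]; [:: 2; 3; 0; 1; 2; 3; 2; 3; 2; 3; 0; 0; 0; 1; 1; 1]; [:: 3; 2; 0; 1; 3; 2; 3; 2; 3; 2; 0; 0; 0; 1; 1; 1]; [:: 3; 2; 1; 0; 3; 2; 3; 2; 3; 2; 1; 1; 1; 0; 0; 0]; [:: 0; 1; 2; 3; 0; 1; 0; 1; 0; 1; 2; 2; 2; 3; 3; 3]; [::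 2; 3; 1; 0; 2; 3; 2; 3; 2; 3; 1; 1; 1; 0; 0; 0]; [:: 0; 2; 1; 3; 0; 2; 0; 2; 0; 2; 1; 1; 1; 3; 3; 3]; [:: 1; 0; 2; 3; 1; 0; 1; 0; 1; 0; 2; 2; 2; 3; 3; 3]; [:: 1; 2; 3; 0; 1; 2; 1; 2; 1; 2; 3; 3; 3; 0; 0; 0]; [:: 1; 2; 0; 3; 1; 2; 1; 2; 1; 2; 0; 0; 0; 3; 3; 3]; [:: 2; 0; 3; 1; 2; 0; 2; 0; 2; 0; 3; 3; 3; 1; 1; 1]; [:: 2; 0; 1; 3; 2; 0; 2; 0; 2; 0; 1; 1; 1; 3; 3; 3]; [:: 2; 1; 3; 0; 2; 1; 2; 1; 2; 1; 3; 3; 3; 0; 0; 0]; [:: 2; 1; 0; 3; 2; 1; 2; 1; 2; 1; 0; 0; 0; 3; 3; 3]].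

Definition mk (n i : nat) : 'I_n.+1 := Ordinal (ltn_pmod i (ltn0Sn n)).
Definition ords n : seq 'I_n.+1 := [seq mk n i | i <- iota 0 n.+1].
Lemma ords_all n (P : pred 'I_n.+1) : all P (ords n) -> forall x, P x.
Proof.
move=> /allP H x; apply: H; apply/mapP; exists (val x); first by rewrite mem_iota /=.
by apply: val_inj; rewrite /= modn_small.
Qed.

Notation Vt := 'I_16.
Notation Dt := 'I_84.
Definition vert (x : Dt) : Vt := mk 15 (nth 0 vtab x).
Definition ff (x : Dt) : Dt := mk 83 (x - x %% 3 + (x %% 3 + 1) %% 3).
Definition ee (x : Dt) : Dt := mk 83 (nth 0 etab x).
Definition nn (x : Dt) : Dt := ee (ff (ff x)).

Definition chk1 := all (fun x => [&& ee (nn (ff x)) == x, ee (ee x) == x, ee x != x &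
   vert x != vert (ee x)]) (ords 83).
Lemma chk1_ok : chk1. Proof. vm_compute. reflexivity. Qed.
Definition chk1b := all (fun x => [&& fcycle ff [:: x; ff x; ff (ff x)], uniq [:: x; ff x; ff (ff x)],
   vert (nn x) == vert x & (ff (ff (ff x)) == x) && fcycle ee [:: x; ee x]]) (ords 83).
Lemma chk1b_ok : chk1b. Proof. vm_compute. reflexivity. Qed.
Definition chk1c := all (fun x => all (fun y => (vert x == vert y) ==> (vert (ee x) == vert (ee y)) ==> (x == y)) (ords 83)) (ords 83).
Lemma chk1c_ok : chk1c. Proof. vm_compute. reflexivity. Qed.
Definition chk2 := all (fun x => all (fun y => (vert x == vert y) ==> has (fun t => iter t nn x == y) (iota 0 16)) (ords 83)) (ords 83).
Lemma chk2_ok : chk2. Proof. vm_compute. reflexivity. Qed.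


Lemma chk1x (x : Dt) : [&& ee (nn (ff x)) == x, ee (ee x) == x, ee x != x &
   vert x != vert (ee x)].
Proof. exact: (ords_all chk1_ok). Qed.
Lemma chk1bx (x : Dt) : [&& fcycle ff [:: x; ff x; ff (ff x)], uniq [:: x; ff x; ff (ff x)],
   vert (nn x) == vert x & (ff (ff (ff x)) == x) && fcycle ee [:: x; ee x]].
Proof. exact: (ords_all chk1b_ok). Qed.

Lemma ee_inv x : ee (ee x) = x. Proof. by case/and4P: (chk1x x) => _ /eqP. Qed.
Lemma cancel3 x : ee (nn (ff x)) = x. Proof. by case/and4P: (chk1x x) => /eqP. Qed.
Lemma ee_nofix x : ee x != x. Proof. by case/and4P: (chk1x x). Qed.
Lemma noloop x : vert x != vert (ee x). Proof. by case/and4P: (chk1x x). Qed.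
Lemma fcyc x : fcycle ff [:: x; ff x; ff (ff x)]. Proof. by case/and4P: (chk1bx x). Qed.
Lemma funiq x : uniq [:: x; ff x; ff (ff x)]. Proof. by case/and4P: (chk1bx x). Qed.
Lemma vert_nn x : vert (nn x) = vert x. Proof. by case/and4P: (chk1bx x) => _ _ /eqP. Qed.
Lemma ff3 x : ff (ff (ff x)) = x.
Proof. by case/and4P: (chk1bx x) => _ _ _ /andP[/eqP]. Qed.
Lemma ff_inj : injective ff. Proof. exact: (can_inj (g:= fun x => ff (ff x)) ff3). Qed.
Lemma ee_inj : injective ee. Proof. exact: (can_inj ee_inv). Qed.
Lemma nn_inj : injective nn. Proof. by move=> x y /ee_inj /ff_inj /ff_inj. Qed.

Lemma fconn_ff x y : fconnect ff x y = (y \in [:: x; ff x; ff (ff x)]).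
Proof. by apply: fconnect_cycle; [exact: fcyc | rewrite inE eqxx]. Qed.

Lemma nomulti x y : vert x = vert y -> vert (ee x) = vert (ee y) -> x = y.
Proof.
move=> H1 H2; move: (ords_all (ords_all chk1c_ok x) y).
by rewrite H1 H2 !eqxx /= => /eqP.
Qed.

Lemma pt_vertP x y : (vert x == vert y) = fconnect nn x y.
Proof.
apply/idP/idP => [H | ].
  move: (ords_all (ords_all chk2_ok x) y); rewrite H implyTb => /hasP [t _ /eqP <-].
  exact: fconnect_iter.
move=> H; apply/eqP; apply: (fconnect_invariant (f := nn)) H => z; apply/eqP; exact: vert_nn.
Qed.

Lemma order_ff x : order ff x = 3.
Proof. by rewrite (order_cycle (fcyc x) (funiq x)) // inE eqxx. Qed.

Lemma order_ee x : order ee x = 2.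
Proof.
have c : fcycle ee [:: x; ee x] by case/and4P: (chk1bx x) => _ _ _ /andP[].
have u : uniq [:: x; ee x] by rewrite /= inE eq_sym ee_nofix.
by rewrite (order_cycle c u) // inE eqxx.
Qed.

Lemma fcard_ff : fcard ff [set: Dt] = 28.
Proof.
have := @fcard_order_set _ ff ff_inj 3 [set: Dt].
rewrite cardsT card_ord => H.
suff: fcard ff [set: Dt] * 3 = 84 by lia.
apply: H; first by apply/subsetP => x _; rewrite inE order_ff.
by move=> x y _; rewrite !inE.
Qed.

Lemma fcard_ee : fcard ee [set: Dt] = 42.
Proof.
have := @fcard_order_set _ ee ee_inj 2 [set: Dt].
rewrite cardsT card_ord => H.
suff: fcard ee [set: Dt] * 2 = 84 by lia.
apply: H; first by apply/subsetP => x _; rewrite inE order_ee.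
by move=> x y _; rewrite !inE.
Qed.

Definition chk3 := all (fun v : Vt => has (fun x => vert x == v) (ords 83)) (ords 15).
Lemma chk3_ok : chk3. Proof. vm_compute. reflexivity. Qed.
Lemma vert_surj v : exists x, vert x = v.
Proof. by case/hasP: (ords_all chk3_ok v) => x _ /eqP; exists x. Qed.

Lemma fcard_nn : fcard nn [set: Dt] = 16.
Proof.
have symn : connect_sym (frel nn) := fconnect_sym nn_inj.
rewrite /n_comp_mem.
set R := [set x | froots nn x].
have -> : #|predI (froots nn) (mem [set: Dt])| = #|R|.
  by apply: eq_card => x; rewrite !inE andbT.
rewrite -(card_in_imset (f := vert)); last first.
  move=> x y; rewrite !inE => rx ry /eqP; rewrite pt_vertP => /(rootP symn).
  by rewrite (eqP rx) (eqP ry).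
have -> : vert @: R = [set: Vt].
  apply/setP => v; rewrite inE; case: (vert_surj v) => x <-.
  apply/imsetP; exists (froot nn x); first by rewrite inE roots_root.
  by apply/eqP; rewrite pt_vertP; apply: connect_root.
by rewrite cardsT card_ord.
Qed.


Fixpoint grow (T : eqType) (cand : T -> seq T) (k : nat) (s : seq T) : seq T :=
  match k with 0 => s | k'.+1 => grow cand k' (undup (s ++ flatten (map cand s))) end.

Lemma grow_inv (T : eqType) (cand : T -> seq T) (Q : pred T) :
  (forall y z, Q y -> z \in cand y -> Q z) -> forall k s, all Q s -> all Q (grow cand k s).
Proof.
move=> HQ; elim=> [//|k IH] s Hs /=; apply: IH; apply/allP => z.
rewrite mem_undup mem_cat => /orP [/(allP Hs) //|].
by case/flattenP => l /mapP [y ys ->]; apply: HQ; apply: (allP Hs).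
Qed.

Definition gl := glink ee nn ff.
Definition d0 : Dt := mk 83 0.
Definition cand1 (y : Dt) := [:: ee y; nn y; ff y].
Definition cand2 (y : Dt) := [:: ee y; ff (ee y); ff (ff y)].
Definition G1 := grow cand1 30 [:: d0].
Definition G2 := grow cand2 30 [:: d0].
Definition chk4 := all (fun y => [&& y \in G1, y \in G2 & all (fun z => gl z y) (cand2 y)]) (ords 83).
Lemma chk4_ok : chk4. Proof. vm_compute. reflexivity. Qed.
Lemma chk4x y : [&& y \in G1, y \in G2 & all (fun z => gl z y) (cand2 y)].
Proof. have := chk4_ok; rewrite /chk4 => H; exact: (ords_all H y). Qed.

Lemma connected x y : connect gl x y.
Proof.
have H1 : all (fun z => connect gl d0 z) G1.
  apply: grow_inv; last by apply/allP => z; rewrite inE => /eqP ->; exact: connect0.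
  move=> y0 z H; rewrite !inE => Hz; apply: connect_trans H (connect1 _).
  rewrite /gl /glink; apply/or3P; case/or3P: Hz => /eqP ->; [apply: Or31 | apply: Or32 | apply: Or33]; exact: eqxx.
have H2 : all (fun z => connect gl z d0) G2.
  apply: grow_inv; last by apply/allP => z; rewrite inE => /eqP ->; exact: connect0.
  move=> y0 z H Hz; apply: connect_trans H.
  apply: connect1; move: (chk4x y0) => /and3P [_ _ /allP Hc]; exact: Hc.
apply: (connect_trans (y := d0)).
  apply: (allP H2); case/and3P: (chk4x x) => _ Hx _; exact: Hx.
apply: (allP H1); case/and3P: (chk4x y) => Hy _ _; exact: Hy.
Qed.

Lemma pt : plane_triangulation vert ee nn ff.
Proof.
constructor.
- exact: cancel3.
- exact: ee_inv.
- exact: ee_nofix.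
- exact: pt_vertP.
- exact: vert_surj.
- exact: connected.
- by rewrite fcard_ee fcard_nn fcard_ff card_ord.
- exact: order_ff.
- exact: noloop.
- exact: nomulti.
Qed.


Section Twin.
Variables (W : finType) (a : rel W).

Lemma blk_neq (P : {set {set W}}) u v : partition P [set: W] ->
  (forall B, B \in P -> independent a B) -> a u v -> pblock P u != pblock P v.
Proof.
case/and3P => /eqP cov _ _ Hind Huv; apply/negP => /eqP E.
have cu : u \in cover P by rewrite cov inE.
have cv : v \in cover P by rewrite cov inE.
have Pu := pblock_mem cu.
have uin : u \in pblock P u by rewrite mem_pblock.
have vin : v \in pblock P u by rewrite E mem_pblock.
move: (Hind _ Pu) => /forallP /(_ u); rewrite uin implyTb => /forallP /(_ v).
by rewrite vin implyTb Huv.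
Qed.

Lemma twin_part (P : {set {set W}}) x1 x2 x3 y z :
  partition P [set: W] -> #|P| = 4 -> (forall B, B \in P -> independent a B) ->
  a x1 x2 -> a x1 x3 -> a x2 x3 -> a x1 y -> a x2 y -> a x3 y -> a x1 z -> a x2 z -> a x3 z ->
  pblock P y = pblock P z.
Proof.
move=> Hp Hc Hi a12 a13 a23 a1y a2y a3y a1z a2z a3z.
have cov : cover P = [set: W] by case/and3P: Hp => /eqP.
have mem x : pblock P x \in P by apply: pblock_mem; rewrite cov inE.
have ne u v : a u v -> pblock P u != pblock P v by apply: blk_neq.
set S := pblock P x1 |: (pblock P x2 |: (pblock P x3 |: [set pblock P y])).
have sS : S \subset P by apply/subsetP => B; rewrite !inE => /or4P [] /eqP ->; apply: mem.
have cS : #|S| = 4.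
  rewrite !cardsU1 cards1 !inE !negb_or (ne _ _ a12) (ne _ _ a13) (ne _ _ a1y).
  by rewrite (ne _ _ a23) (ne _ _ a2y) (ne _ _ a3y).
have := subset_cardP (etrans cS (esym Hc)) sS => eqS.
move: (mem z); rewrite -eqS !inE => /or4P [] /eqP E.
- by move: (ne _ _ a1z); rewrite E eqxx.
- by move: (ne _ _ a2z); rewrite E eqxx.
- by move: (ne _ _ a3z); rewrite E eqxx.
- by rewrite E.
Qed.

Lemma pig4 (p q r s t : 'I_4) : p != q -> p != r -> q != r -> p != s -> q != s -> r != s ->
  p != t -> q != t -> r != t -> s = t.
Proof.
move=> *; apply: val_inj => /=; have := ltn_ord p; have := ltn_ord q; have := ltn_ord r;
  have := ltn_ord s; have := ltn_ord t.
repeat match goal with H : is_true (_ != _) |- _ => move: H; rewrite -(inj_eq val_inj) /= end.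
move=> *; lia.
Qed.

Lemma twin_col (c : {ffun W -> 'I_4}) x1 x2 x3 y z :
  proper_colouring a c ->
  a x1 x2 -> a x1 x3 -> a x2 x3 -> a x1 y -> a x2 y -> a x3 y -> a x1 z -> a x2 z -> a x3 z ->
  c y = c z.
Proof.
move=> Hc; have ne u v : a u v -> c u != c v.
  by move=> Huv; move: Hc => /forallP /(_ u) /forallP /(_ v); rewrite Huv.
move=> a12 a13 a23 a1y a2y a3y a1z a2z a3z.
apply: (pig4 (p := c x1) (q := c x2) (r := c x3)); apply: ne => //.
Qed.
End Twin.


Definition c0n (v : Vt) : nat := nth 0 ctab v.
Definition repn (k : nat) : Vt := mk 15 k.
Definition adjV (u w : Vt) := has (fun x => (vert x == u) && (vert (ee x) == w)) (ords 83).
Definition twa (v : Vt) : Vt := mk 15 (nth 0 ta v).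
Definition twb (v : Vt) : Vt := mk 15 (nth 0 tb v).
Definition twc (v : Vt) : Vt := mk 15 (nth 0 tc v).
Definition twd (v : Vt) : Vt := mk 15 (nth 0 td v).

Definition chk5 := all (fun v : Vt => if v < 4 then repn (c0n v) == v else
  [&& twd v < v, c0n (twd v) == c0n v, adjV (twa v) (twb v), adjV (twa v) (twc v),
      adjV (twb v) (twc v), adjV (twa v) (twd v), adjV (twb v) (twd v), adjV (twc v) (twd v),
      adjV (twa v) v, adjV (twb v) v & adjV (twc v) v]) (ords 15).
Lemma chk5_ok : chk5. Proof. vm_compute. reflexivity. Qed.
Lemma chk5x (v : Vt) : if v < 4 then repn (c0n v) == v else
  [&& twd v < v, c0n (twd v) == c0n v, adjV (twa v) (twb v), adjV (twa v) (twc v),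
      adjV (twb v) (twc v), adjV (twa v) (twd v), adjV (twb v) (twd v), adjV (twc v) (twd v),
      adjV (twa v) v, adjV (twb v) v & adjV (twc v) v].
Proof. have := chk5_ok; rewrite /chk5 => H; exact: (ords_all H v). Qed.

Definition chk6 := [&& all (fun v => c0n v < 4) (ords 15),
  all (fun k => all (fun l => (k != l) ==> adjV (repn k) (repn l)) (iota 0 4)) (iota 0 4),
  all (fun k => c0n (repn k) == k) (iota 0 4) &
  all (fun x => c0n (vert x) != c0n (vert (ee x))) (ords 83)].
Lemma chk6_ok : chk6. Proof. vm_compute. reflexivity. Qed.

Lemma c0n_lt (v : Vt) : c0n v < 4.
Proof. case/and4P: chk6_ok => H _ _ _; exact: (ords_all H v). Qed.
Lemma rep_adj k l : k < 4 -> l < 4 -> k != l -> adjV (repn k) (repn l).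
Proof.
case/and4P: chk6_ok => _ /allP H _ _ hk hl; move: (H k); rewrite mem_iota add0n hk => /(_ isT).
by move=> /allP /(_ l); rewrite mem_iota add0n hl => /(_ isT) /implyP.
Qed.
Lemma c0n_rep k : k < 4 -> c0n (repn k) = k.
Proof.
case/and4P: chk6_ok => _ _ /allP H _ hk; apply/eqP; apply: H; rewrite mem_iota add0n hk; exact: isT.
Qed.
Lemma c0_proper x : c0n (vert x) != c0n (vert (ee x)).
Proof. case/and4P: chk6_ok => _ _ _ H; exact: (ords_all H x). Qed.

Notation adjG := (adj vert ee).

Lemma adjV_adj u w : adjV u w -> adjG u w.
Proof. by case/hasP => x _ H; apply/existsP; exists x. Qed.

Lemma forced (T : Type) (g : Vt -> T) :
  (forall x1 x2 x3 y z : Vt, adjG x1 x2 -> adjG x1 x3 -> adjG x2 x3 -> adjG x1 y -> adjG x2 y ->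
     adjG x3 y -> adjG x1 z -> adjG x2 z -> adjG x3 z -> g y = g z) ->
  forall v, g v = g (repn (c0n v)).
Proof.
move=> Htw; suff H : forall m (v : Vt), v < m -> g v = g (repn (c0n v)).
  by move=> v; apply: (H 16).
elim=> [//|m IH] v Hv.
have := chk5x v; case: ifP => _.
  by move/eqP => ->.
case/andP => Hd /andP [Hc /andP [ab /andP [ac /andP [bc /andP [ad /andP [bd /andP [cd
  /andP [av /andP [bv cv]]]]]]]]].
rewrite -(eqP Hc) -(IH (twd v)); last exact: leq_trans Hd Hv.
symmetry; apply: (Htw (twa v) (twb v) (twc v)); apply: adjV_adj; assumption.
Qed.

Definition Bk (x : Vt) := [set y in [set: Vt] | c0n x == c0n y].
Definition P0 := preim_partition c0n [set: Vt].

Lemma P0E : P0 = [set Bk (repn (val k)) | k : 'I_4].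
Proof.
apply/setP => B; apply/imsetP/imsetP => [[x _ ->]|[k _ ->]].
  exists (mk 3 (c0n x)); first by rewrite inE.
  apply/setP => y; rewrite !inE /= modn_small ?c0n_lt // c0n_rep ?c0n_lt //.
by exists (repn k); rewrite ?inE.
Qed.

Lemma P0_card : #|P0| = 4.
Proof.
rewrite P0E card_imset ?card_ord //.
move=> k l E; apply: val_inj.
have : repn l \in Bk (repn l) by rewrite /Bk !inE eqxx.
rewrite -E /Bk !inE c0n_rep ?ltn_ord // c0n_rep ?ltn_ord // => /eqP ->; reflexivity.
Qed.

Lemma P0_ok : [&& partition P0 [set: Vt], #|P0| == 4 & [forall B in P0, independent adjG B]].
Proof.
apply/and3P; split; first exact: preim_partitionP.
  by rewrite P0_card.
apply/forallP => B; apply/implyP => /imsetP [x _ ->].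
apply/forallP => u; apply/implyP; rewrite !inE => /eqP Hu.
apply/forallP => w; apply/implyP; rewrite !inE => /eqP Hw.
apply/negP => /existsP [z /andP [/eqP Hz /eqP Hz']].
by move: (c0_proper z); rewrite Hz Hz' -Hu -Hw eqxx.
Qed.

Lemma uniq4 : uniquely_4_colourable adjG.
Proof.
exists P0; split; first exact: P0_ok.
move=> P /and3P [Hp /eqP Hc /forallP Hi].
have Hi' B : B \in P -> independent adjG B by move=> HB; move: (Hi B); rewrite HB.
have Gp := forced (fun x1 x2 x3 y z => twin_part Hp Hc Hi').
have cov : cover P = [set: Vt] by case/and3P: Hp => /eqP.
have tI : trivIset P by case/and3P: Hp.
have n0 : set0 \notin P by case/and3P: Hp.
have key x : Bk x = pblock P x.
  apply/setP => y; rewrite !inE -eq_pblock ?cov ?inE // (Gp x) (Gp y).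
  have := c0n_lt x; have := c0n_lt y.
  case: (eqVneq (c0n x) (c0n y)) => [->|ne] hy hx; first by rewrite !eqxx.
  apply/esym/negbTE; apply: (blk_neq Hp Hi'); apply: adjV_adj; exact: rep_adj.
apply/setP => B; apply/idP/idP.
  case/imsetP => x _ ->; rewrite -/(Bk x) key; apply: pblock_mem; rewrite cov inE; exact: isT.
move=> HB; have : B != set0 by apply: contraNneq n0 => <-.
case/set0Pn => y Hy; rewrite -(def_pblock tI HB Hy) -key.
by apply/imsetP; exists y; rewrite ?inE.
Qed.


Definition coln (i : 'I_24) (v : Vt) : nat := nth 0 (nth [::] coltab i) v.
Definition colr (i : 'I_24) : {ffun Vt -> 'I_4} := [ffun v => mk 3 (coln i v)].
Definition dsel (i : 'I_24) : Dt := mk 83 (nth 0 seltab i).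
Definition tri (x : Dt) := [:: x; ff x; ff (ff x)].
Definition facepick (i : 'I_24) : {set Dt} := [set y | fconnect ff (dsel i) y].

Definition chk7 := all (fun a => all (fun b => all (fun c => all (fun d =>
  uniq [:: a; b; c; d] ==> has (fun i => all (fun v =>
     nth 0 (nth [::] coltab i) v == nth 0 [:: a; b; c; d] (nth 0 ctab v)) (iota 0 16)) (iota 0 24))
  (iota 0 4)) (iota 0 4)) (iota 0 4)) (iota 0 4).
Lemma chk7_ok : chk7. Proof. vm_compute. reflexivity. Qed.

Definition chk8 := all (fun i => all (fun x => mk 3 (coln i (vert x)) != mk 3 (coln i (vert (ee x)))) (ords 83)) (ords 23).
Lemma chk8_ok : chk8. Proof. vm_compute. reflexivity. Qed.
Definition chk9 := all (fun i => all (fun j => (i == j) || has (fun v => mk 3 (coln i v) != mk 3 (coln j v)) (ords 15)) (ords 23)) (ords 23).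
Lemma chk9_ok : chk9. Proof. vm_compute. reflexivity. Qed.
Definition chk10 := all (fun i => all (fun j => (dsel j \in tri (dsel i)) ==> (i == j)) (ords 23)) (ords 23).
Lemma chk10_ok : chk10. Proof. vm_compute. reflexivity. Qed.
Definition chk11 := all (fun i => all (fun y => mk 3 (coln i (vert y)) != (ord_max : 'I_4)) (tri (dsel i)) &&
   all (fun k => (k != (ord_max : 'I_4)) ==> has (fun y => mk 3 (coln i (vert y)) == k) (tri (dsel i))) (ords 3)) (ords 23).
Lemma chk11_ok : chk11. Proof. vm_compute. reflexivity. Qed.

Lemma colr_proper i : proper_colouring adjG (colr i).
Proof.
apply/forallP => u; apply/forallP => w; apply/implyP => /existsP [x /andP [/eqP <- /eqP <-]].
rewrite !ffunE; have := chk8_ok; rewrite /chk8 => H; exact: (ords_all (ords_all H i) x).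
Qed.

Lemma colr_inj : injective colr.
Proof.
move=> i j E; have := chk9_ok; rewrite /chk9 => H.
case/orP: (ords_all (ords_all H i) j) => [/eqP Hij|/hasP [v _ Hv]]; first exact: Hij.
have := congr1 (fun f : {ffun Vt -> 'I_4} => f v) E; rewrite !ffunE => E'.
by rewrite E' eqxx in Hv.
Qed.

Lemma facepick_inj : injective facepick.
Proof.
move=> i j E; have := chk10_ok; rewrite /chk10 => H.
have : dsel j \in facepick i by rewrite E inE; exact: connect0.
rewrite inE fconn_ff -/(tri (dsel i)) => Hj.
move: (ords_all (ords_all H i) j); rewrite Hj implyTb => /eqP Hij; exact: Hij.
Qed.

Definition phi (F : {set Dt}) : {ffun Vt -> 'I_4} :=
  odflt (colr ord0) (omap colr [pick j | dsel j \in F]).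

Lemma phi_pick i : phi (facepick i) = colr i.
Proof.
rewrite /phi; case: pickP => [j Hj | H].
  move: Hj; rewrite inE fconn_ff -/(tri (dsel i)) => Hj.
  have := chk10_ok; rewrite /chk10 => H.
  move: (ords_all (ords_all H i) j); rewrite Hj implyTb => /eqP Hij; rewrite Hij; reflexivity.
move: (H i); rewrite inE connect0 => F; discriminate F.
Qed.

Lemma proper_colr c : proper_colouring adjG c -> exists i, colr i = c.
Proof.
move=> Hc.
have Lc := forced (fun x1 x2 x3 y z => twin_col Hc).
have ne k l : k < 4 -> l < 4 -> k != l -> val (c (repn k)) != val (c (repn l)).
  move=> hk hl kl; rewrite (inj_eq val_inj).
  by move: Hc => /forallP /(_ (repn k)) /forallP /(_ (repn l)); rewrite adjV_adj ?rep_adj.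
set a := val (c (repn 0)); set b := val (c (repn 1)); set cc := val (c (repn 2)); set d := val (c (repn 3)).
have U : uniq [:: a; b; cc; d].
  rewrite /= !inE !negb_or !ne //.
have := chk7_ok; rewrite /chk7 => /allP /(_ a) H; move: H.
rewrite mem_iota ltn_ord => /(_ isT) /allP /(_ b); rewrite mem_iota ltn_ord => /(_ isT).
move=> /allP /(_ cc); rewrite mem_iota ltn_ord => /(_ isT).
move=> /allP /(_ d); rewrite mem_iota ltn_ord => /(_ isT).
rewrite U implyTb => /hasP [i]; rewrite mem_iota add0n => Hi /allP Hv.
exists (Ordinal Hi); apply/ffunP => v; rewrite ffunE; apply: val_inj.
rewrite /= /coln /=.
move: (Hv v); rewrite mem_iota add0n ltn_ord => /(_ isT) /eqP ->.
rewrite (Lc v) -/(c0n v); have := c0n_lt v.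
case: (c0n v) => [|[|[|[|]]]] // _; rewrite modn_small //; exact: ltn_ord.
Qed.

Lemma mem_ords n (x : 'I_n.+1) : x \in ords n.
Proof. apply/mapP; exists (val x); first by rewrite mem_iota /=. by apply: val_inj; rewrite /= modn_small. Qed.

Lemma face_prop i : [set phi (facepick i) v | v in vert @: facepick i] = ~: [set (ord_max : 'I_4)].
Proof.
rewrite phi_pick; have := chk11_ok; rewrite /chk11 => H.
case/andP: (ords_all H i) => /allP H1 /allP H2.
apply/setP => k; rewrite in_setC in_set1; apply/imsetP/idP.
  case=> w /imsetP [y Hy ->] ->; rewrite ffunE; apply: H1.
  move: Hy; rewrite inE fconn_ff => Hy; exact: Hy.
move=> Hk; move: (H2 k (mem_ords k)); rewrite Hk implyTb => /hasP [y Hy /eqP Hyk].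
exists (vert y); last by rewrite ffunE Hyk.
apply/imsetP; exists y => //; rewrite inE fconn_ff; exact: Hy.
Qed.

Theorem lemma7 :
  exists (V D : finType) (vert : D -> V) (e n f : D -> D),
    plane_triangulation vert e n f /\
    uniquely_4_colourable (adj vert e) /\
    exists (FF : {set {set D}}) (phi : {set D} -> {ffun V -> 'I_4}),
      [/\ FF \subset faces f,
          #|FF| = 24,
          {in FF &, injective phi},
          phi @: FF = [set c | proper_colouring (adj vert e) c] &
          forall F, F \in FF ->
            [set phi F v | v in vert @: F] = ~: [set (ord_max : 'I_4)]].
Proof.
exists Vt, Dt, vert, ee, nn, ff; split; first exact: pt.
split; first exact: uniq4.
exists [set facepick i | i : 'I_24], phi; split.
- apply/subsetP => F /imsetP [i _ ->]; apply/imsetP; exists (dsel i); first by rewrite inE.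
  reflexivity.
- rewrite card_imset ?card_ord //; exact: facepick_inj.
- move=> F1 F2 /imsetP [i _ ->] /imsetP [j _ ->]; rewrite !phi_pick => /colr_inj ->; reflexivity.
- apply/setP => c; rewrite inE; apply/imsetP/idP.
    case=> F /imsetP [i _ ->] ->; rewrite phi_pick; exact: colr_proper.
  move=> Hc; case: (proper_colr Hc) => i <-; exists (facepick i); last by rewrite phi_pick.
  by apply/imsetP; exists i.
- move=> F /imsetP [i _ ->]; exact: face_prop.
Qed.
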